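(* There is an absolute constant $c>0$ such that the following holds. Let $m,n\ge1$ be integers, $\gamma,\delta>0$, and let $x\in\mathbb{R}^n$ satisfy $\|x\|_\infty\le\delta$ and $\|x\|_2^2\ge\|x\|_\infty^2+\gamma^2$. Let $T=\pi m/\delta$. Then $$\int_0^T\prod_{i=1}^n F\!\left(\frac{x_i t}{2\pi m}\right)dt\le\frac{c}{\gamma},$$ where $F(y)=\left|\frac{\sin((2m+1)\pi y)}{(2m+1)\sin(\pi y)}\right|$ (with $F(y)=1$ for $y\in\mathbb{Z}$). *)

(* Defs.v *)
From Stdlib Require Import Reals.
From Coquelicot Require Import Coquelicot.
Open Scope R_scope.

(* Vectors x in R^n are functions nat -> R, only indices 0..n-1 matter. *)

Fixpoint sumR (n : nat) (f : nat -> R) : R :=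
  match n with O => 0 | S k => sumR k f + f k end.

Fixpoint prodR (n : nat) (f : nat -> R) : R :=
  match n with O => 1 | S k => prodR k f * f k end.

Fixpoint linf (n : nat) (x : nat -> R) : R :=
  match n with O => 0 | S k => Rmax (linf k x) (Rabs (x k)) end.

Definition l2sq (n : nat) (x : nat -> R) : R := sumR n (fun i => x i ^ 2).

(* F(y) = |sin((2m+1) pi y) / ((2m+1) sin(pi y))|, with F(y) = 1 for integer y
   (y is an integer iff its fractional part is 0). *)
Definition Fker (m : nat) (y : R) : R :=
  if Req_EM_T (frac_part y) 0 then 1
  else Rabs (sin ((2 * INR m + 1) * PI * y) / ((2 * INR m + 1) * sin (PI * y))).

(* Main.v *)
Require Import Defs.
From Stdlib Require Import Reals Lra Psatz ZArith Lia FunctionalExtensionality.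
From Coquelicot Require Import Coquelicot.
Open Scope R_scope.
Lemma sin_ub_eq t : sin_ub t = t - t^3/6 + t^5/120 - t^7/5040 + t^9/362880.
Proof. unfold sin_ub, sin_approx. simpl sum_f_R0. unfold sin_term.
 cbn [Nat.mul Nat.add]. rewrite !fact_simpl. rewrite !mult_INR. simpl INR. field. Qed.
Lemma sin_lb_eq t : sin_lb t = t - t^3/6 + t^5/120 - t^7/5040.
Proof. unfold sin_lb, sin_approx. simpl sum_f_R0. unfold sin_term.
 cbn [Nat.mul Nat.add]. rewrite !fact_simpl. rewrite !mult_INR. simpl INR. field. Qed.
Lemma PI_ub32 : PI <= 3.2.
Proof.
  destruct (Rle_or_lt PI 3.2) as [h|h]; auto.
  exfalso. assert (H := SIN 3.2 ltac:(lra) ltac:(lra)).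
  assert (H2 := sin_ge_0 3.2 ltac:(lra) ltac:(lra)).
  rewrite sin_ub_eq in H. lra.
Qed.
Lemma sin_lb3 t : 0 <= t <= 2 -> t - t^3/6 <= sin t.
Proof.
  intros. assert (HP := PI2_3_2). assert (H1 := SIN t ltac:(lra) ltac:(lra)).
  rewrite sin_lb_eq in H1.
  assert (h5 : 0 <= t^5) by (apply pow_le; lra).
  assert (h7 : t^7 = t^5 * t^2) by ring.
  assert (h2 : t^2 <= 4) by nra. nra.
Qed.
Lemma sin_ub5 t : 0 <= t <= 3 -> sin t <= t - t^3/6 + t^5/120.
Proof.
  intros. assert (HP := PI2_3_2). assert (H1 := SIN t ltac:(lra) ltac:(lra)).
  rewrite sin_ub_eq in H1.
  assert (h5 : 0 <= t^7) by (apply pow_le; lra).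
  assert (h7 : t^9 = t^7 * t^2) by ring.
  assert (h2 : t^2 <= 9) by nra. nra.
Qed.
Lemma h_neg v : 0 <= v <= 9 ->
  -5/27 + (1/135 - 1/2916) * v + 7/3240 * v^2 - 31/129600 * v^3 + 1/129600 * v^4 <= 0.
Proof. intros. assert (0 <= v*(9-v)) by nra. assert (0<= v^2) by nra. assert (0 <= v^2*(9-v)) by nra.
 assert (0 <= v^3*(9-v)) by nra. nra. Qed.
Lemma poly_ineq v : 0 <= v <= 9 ->
  (1 - v/6 + v^2/120)^2 * (1 + v/9) <= (1 - v/54)^2.
Proof. intros. pose proof (h_neg v H).
 assert (e : (1 - v/6 + v^2/120)^2 * (1 + v/9) - (1 - v/54)^2 =
   v * (-5/27 + (1/135 - 1/2916) * v + 7/3240 * v^2 - 31/129600 * v^3 + 1/129600 * v^4)) by field.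
 nra. Qed.
Lemma PI_lb3 : 3 <= PI.
Proof. pose proof PI2_3_2. lra. Qed.

Lemma core (N th : R) : 3 <= N -> 0 < th <= PI/2 ->
  (sin (N*th))^2 * (1 + (N*th)^2/PI^2) <= (N * sin th)^2.
Proof.
  intros HN Hth. pose proof PI_ub32. pose proof PI_lb3.
  set (u := N*th).
  assert (hpi : (N*th)^2/PI^2 <= u^2/9).
  { unfold u. apply Rmult_le_compat_l. nra. apply Rinv_le_contravar; nra. }
  assert (hs := sin_lb3 th ltac:(lra)).
  destruct (Rle_or_lt 3 u) as [Hu|Hu].
  - assert (hs1 : sin u ^2 <= 1) by (pose proof (sin2 u); pose proof (Rle_0_sqr (cos u)); unfold Rsqr in *; nra).
    assert (hth2 : th^2 <= 2.56) by nra.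
    assert (hNs : N * sin th >= u * (1 - th^2/6)) by (unfold u; nra).
    assert (hNs2 : N * sin th >= 0.57 * u) by nra.
    assert (hsq : (N*sin th)^2 >= 0.3249 * u^2) by nra.
    assert (0 <= (N*th)^2/PI^2) by (apply Rmult_le_pos; [nra| apply Rlt_le, Rinv_0_lt_compat; nra]).
    fold u in hpi. nra.
  - assert (hu0 : 0 < u) by (unfold u; nra).
    assert (hsu := sin_ub5 u ltac:(lra)).
    assert (hsu0 := sin_ge_0 u ltac:(lra) ltac:(lra)).
    assert (hth1 : th <= 1) by (unfold u in Hu; nra).
    assert (hNs : N * sin th >= u - u^3/54).
    { assert (N * sin th >= N*th - N*th^3/6) by nra.
      assert (N*th^3/6 <= u^3/54).
      { unfold u. assert (e: (N*th)^3/54 = N*th^3/6 * (N^2/9)) by field. rewrite e.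
        assert (0 <= N*th^3/6) by (apply Rmult_le_pos; [|lra]; apply Rmult_le_pos; [lra| apply pow_le; lra]).
        assert (1 <= N^2/9) by nra. nra. }
      unfold u in *. lra. }
    assert (hp := poly_ineq (u^2) ltac:(split; nra)).
    assert (hpos : 0 <= u - u^3/54) by nra.
    assert (hp5 : 0 <= u - u^3/6 + u^5/120) by nra.
    assert (e1 : (u - u^3/6 + u^5/120)^2 * (1 + u^2/9) = u^2 * ((1 - u^2/6 + (u^2)^2/120)^2 * (1 + u^2/9))) by field.
    assert (e2 : (u - u^3/54)^2 = u^2 * (1 - u^2/54)^2) by field.
    assert (hA : (u - u^3/6 + u^5/120)^2 * (1 + u^2/9) <= (u - u^3/54)^2).
    { rewrite e1, e2. apply Rmult_le_compat_l; nra. }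
    assert (hB : sin u ^2 <= (u - u^3/6 + u^5/120)^2) by nra.
    assert (hC : (u - u^3/54)^2 <= (N * sin th)^2) by nra.
    assert (0 <= (N*th)^2/PI^2) by (apply Rmult_le_pos; [nra| apply Rlt_le, Rinv_0_lt_compat; nra]).
    fold u in hpi |- *.
    assert (sin u ^2 * (1 + u^2/PI^2) <= sin u^2 * (1 + u^2/9)) by (apply Rmult_le_compat_l; nra).
    assert (sin u ^2 * (1 + u^2/9) <= (u - u^3/6 + u^5/120)^2 * (1 + u^2/9)) by (apply Rmult_le_compat_r; nra).
    nra.
Qed.

Definition Dsum (m:nat) (th:R) := 1 + 2 * sumR m (fun k => cos (2 * INR (S k) * th)).
Definition Dk (m:nat) (y:R) := Rabs (Dsum m (PI*y)) / (2*INR m+1).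

Lemma dir m th : sin th * Dsum m th = sin ((2*INR m+1)*th).
Proof.
  induction m as [|m IH].
  - unfold Dsum. replace ((2*INR 0 + 1)*th) with th by (simpl; ring). simpl. ring.
  - unfold Dsum in *. cbn [sumR].
    replace (sin th * (1 + 2 * (sumR m (fun k => cos (2 * INR (S k) * th)) + cos (2 * INR (S m) * th))))
      with (sin th * (1 + 2 * sumR m (fun k => cos (2 * INR (S k) * th))) + 2 * sin th * cos (2 * INR (S m) * th)) by ring.
    rewrite IH.
    replace ((2 * INR (S m) + 1) * th) with (2 * INR (S m) * th + th) by ring.
    replace ((2 * INR m + 1) * th) with (2 * INR (S m) * th - th) by (rewrite S_INR; ring).
    rewrite sin_plus, sin_minus. ring.
Qed.

Lemma cos_2PIZ j : cos (2 * PI * IZR j) = 1.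
Proof.
  destruct (Z_le_gt_dec 0 j) as [h|h].
  - rewrite <- (Z2Nat.id j h). rewrite <- INR_IZR_INZ.
    replace (2 * PI * INR (Z.to_nat j)) with (0 + 2 * INR (Z.to_nat j) * PI) by ring.
    rewrite cos_period. apply cos_0.
  - assert (h' : (0 <= - j)%Z) by lia.
    replace (2 * PI * IZR j) with (- (0 + 2 * INR (Z.to_nat (-j)) * PI)).
    + rewrite cos_neg, cos_period. apply cos_0.
    + rewrite INR_IZR_INZ, (Z2Nat.id _ h'). rewrite opp_IZR. ring.
Qed.

Lemma sumR_const m c : sumR m (fun _ => c) = INR m * c.
Proof. induction m; simpl sumR; [simpl; ring| rewrite IHm, S_INR; ring]. Qed.

Lemma sumR_ext n f g : (forall i, (i < n)%nat -> f i = g i) -> sumR n f = sumR n g.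
Proof. induction n; intros H; simpl; auto. rewrite IHn by (intros; apply H; lia). rewrite H by lia. auto. Qed.

Lemma frac_IZR k : frac_part (IZR k) = 0.
Proof.
  unfold frac_part. rewrite <- (Int_part_spec (IZR k) k). ring. lra.
Qed.

Lemma Fker_Dk m y : Fker m y = Dk m y.
Proof.
  assert (hN : 0 < 2 * INR m + 1) by (pose proof (pos_INR m); lra).
  unfold Fker, Dk. destruct (Req_EM_T (frac_part y) 0) as [h|h].
  - unfold frac_part in h. assert (ey : y = IZR (Int_part y)) by lra.
    set (z := Int_part y) in ey. rewrite ey. unfold Dsum.
    rewrite (sumR_ext m _ (fun _ => 1)).
    + rewrite sumR_const. rewrite Rabs_pos_eq by (pose proof (pos_INR m); lra). field. lra.
    + intros i _. replace (2 * INR (S i) * (PI * IZR z)) with (2 * PI * IZR (Z.of_nat (S i) * z)).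
      * apply cos_2PIZ.
      * rewrite mult_IZR, <- INR_IZR_INZ. ring.
  - assert (hs : sin (PI * y) <> 0).
    { intro e. destruct (sin_eq_0_0 _ e) as [k hk]. apply h.
      assert (y = IZR k) by (pose proof PI_RGT_0; nra). subst. apply frac_IZR. }
    replace ((2 * INR m + 1) * PI * y) with ((2 * INR m + 1) * (PI * y)) by ring.
    rewrite <- dir. replace (sin (PI * y) * Dsum m (PI * y) / ((2 * INR m + 1) * sin (PI * y)))
      with (Dsum m (PI * y) / (2 * INR m + 1)) by (field; lra).
    unfold Rdiv. rewrite Rabs_mult, Rabs_inv. rewrite (Rabs_pos_eq (2 * INR m + 1)) by lra. auto.
Qed.

Lemma Dsum_abs m th : Dsum m th = Dsum m (Rabs th).
Proof.
  unfold Dsum. f_equal. f_equal. apply sumR_ext. intros i _.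
  destruct (Rle_or_lt 0 th).
  - rewrite Rabs_pos_eq; auto.
  - rewrite Rabs_left by auto. rewrite <- cos_neg. f_equal. ring.
Qed.

Lemma Dk_bound m y : (1 <= m)%nat -> Rabs y <= 1/2 ->
  (Dk m y)^2 * (1 + (2*INR m+1)^2 * y^2) <= 1.
Proof.
  intros Hm Hy. assert (HmR : 1 <= INR m) by (apply (le_INR 1); auto).
  set (N := 2*INR m+1). assert (HN : 3 <= N) by (unfold N; lra).
  pose proof PI_RGT_0 as Hpi.
  destruct (Req_dec y 0) as [e|hy].
  - subst. rewrite <- Fker_Dk. unfold Fker. pose proof (frac_IZR 0) as f0.
    destruct (Req_EM_T (frac_part 0) 0) as [_|c]; [|contradiction]. lra.
  - set (th := PI * Rabs y).
    assert (Hth : 0 < th <= PI/2) by (unfold th; split; [apply Rmult_lt_0_compat; [lra| apply Rabs_pos_lt; auto]| assert (PI * Rabs y <= PI * (1/2)) by (apply Rmult_le_compat_l; lra); lra]).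
    assert (hs : 0 < sin th) by (apply sin_gt_0; lra).
    assert (hd : Dsum m (PI*y) = sin (N*th) / sin th).
    { rewrite Dsum_abs, Rabs_mult, (Rabs_pos_eq PI) by lra. fold th.
      assert (hdir := dir m th). fold N in hdir. rewrite <- hdir. field. lra. }
    assert (hc := core N th HN Hth).
    assert (hy2 : (N*th)^2/PI^2 = N^2*y^2).
    { unfold th. rewrite <- (pow2_abs y). field. lra. }
    rewrite hy2 in hc.
    unfold Dk. fold N. rewrite hd.
    assert (e : (Rabs (sin (N * th) / sin th) / N) ^ 2 = sin (N*th)^2 / (N * sin th)^2).
    { replace ((Rabs (sin (N * th) / sin th) / N) ^ 2) with ((Rabs (sin (N * th) / sin th))^2 / N^2) by (field; lra).
      rewrite pow2_abs. field. split; lra. }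
    rewrite e.
    assert (0 < (N*sin th)^2) by (apply pow_lt; nra).
    unfold Rdiv. rewrite Rmult_comm, <- Rmult_assoc.
    apply (Rmult_le_reg_r ((N * sin th)^2)); auto.
    rewrite Rmult_assoc, Rinv_l by lra. lra.
Qed.

Lemma sumR_scal n k f : sumR n (fun i => k * f i) = k * sumR n f.
Proof. induction n; cbn [sumR prodR]; [ring| rewrite IHn; ring]. Qed.

Lemma sumR_nonneg n f : (forall i, (i<n)%nat -> 0 <= f i) -> 0 <= sumR n f.
Proof. induction n; intros H; cbn [sumR prodR]; [lra|]. assert (0 <= sumR n f) by (apply IHn; intros; apply H; lia).
  assert (0 <= f n) by (apply H; lia). lra. Qed.

Lemma sumR_le n f g : (forall i, (i<n)%nat -> f i <= g i) -> sumR n f <= sumR n g.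
Proof. induction n; intros H; cbn [sumR prodR]; [lra|]. assert (sumR n f <= sumR n g) by (apply IHn; intros; apply H; lia).
  assert (f n <= g n) by (apply H; lia). lra. Qed.

Lemma sum_sq_ge n a : (forall i, (i<n)%nat -> 0 <= a i) ->
  sumR n (fun i => a i ^2) <= sumR n a ^ 2.
Proof. induction n; intros H; cbn [sumR prodR]; [lra|].
  assert (sumR n (fun i => a i ^2) <= sumR n a ^ 2) by (apply IHn; intros; apply H; lia).
  assert (0 <= a n) by (apply H; lia). assert (0 <= sumR n a) by (apply sumR_nonneg; intros; apply H; lia).
  nra. Qed.

Lemma prod_ge n a : (forall i, (i<n)%nat -> 0 <= a i) ->
  1 + sumR n a + (sumR n a ^2 - sumR n (fun i => a i ^2))/2 <= prodR n (fun i => 1 + a i).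
Proof. induction n; intros H; cbn [sumR prodR]; [lra|].
  assert (h1 := IHn ltac:(intros; apply H; lia)).
  assert (h2 := sum_sq_ge n a ltac:(intros; apply H; lia)).
  assert (0 <= a n) by (apply H; lia). assert (0 <= sumR n a) by (apply sumR_nonneg; intros; apply H; lia).
  pose proof (Rmult_le_compat_r (a n) _ _ ltac:(lra) h1).
  pose proof (Rmult_le_compat_r (a n) _ _ ltac:(lra) h2).
  nra. Qed.

Lemma prodR_nonneg n f : (forall i, (i<n)%nat -> 0 <= f i) -> 0 <= prodR n f.
Proof. induction n; intros H; cbn [sumR prodR]; [lra|]. apply Rmult_le_pos; [apply IHn; intros; apply H; lia| apply H; lia]. Qed.

Lemma prodR_le1 n f : (forall i, (i<n)%nat -> 0 <= f i <= 1) -> prodR n f <= 1.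
Proof. induction n; intros H; cbn [sumR prodR]; [lra|].
  assert (prodR n f <= 1) by (apply IHn; intros; apply H; lia).
  assert (0 <= prodR n f) by (apply prodR_nonneg; intros; apply H; lia).
  assert (0 <= f n <= 1) by (apply H; lia). nra. Qed.

Lemma prodR_sq n f : prodR n f ^ 2 = prodR n (fun i => f i ^ 2).
Proof. induction n; cbn [sumR prodR]; [ring| rewrite <- IHn; ring]. Qed.

Lemma prod_mul_le1 n a b : (forall i, (i<n)%nat -> 0 <= a i /\ 0 <= b i /\ b i * (1 + a i) <= 1) ->
  prodR n b * prodR n (fun i => 1 + a i) <= 1.
Proof. induction n; intros H; cbn [sumR prodR]; [lra|].
  assert (prodR n b * prodR n (fun i => 1 + a i) <= 1) by (apply IHn; intros; apply H; lia).
  assert (0 <= prodR n b) by (apply prodR_nonneg; intros; apply H; lia).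
  assert (0 <= prodR n (fun i => 1 + a i)) by (apply prodR_nonneg; intros; pose proof (H i ltac:(lia)); lra).
  destruct (H n ltac:(lia)) as [h1 [h2 h3]].
  replace (prodR n b * b n * (prodR n (fun i => 1 + a i) * (1 + a n))) with
    ((prodR n b * prodR n (fun i => 1 + a i)) * (b n * (1 + a n))) by ring.
  assert (0 <= prodR n b * prodR n (fun i => 1 + a i)) by nra.
  assert (0 <= b n * (1 + a n)) by nra. nra. Qed.

Lemma linf_nonneg n x : 0 <= linf n x.
Proof. induction n; cbn [linf]; [lra|]. apply (Rle_trans _ _ _ IHn), Rmax_l. Qed.

Lemma linf_ge n x i : (i < n)%nat -> Rabs (x i) <= linf n x.
Proof. induction n; intros H; [lia|]. simpl. destruct (Nat.eq_dec i n).
  - subst. apply Rmax_r.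
  - apply (Rle_trans _ _ _ (IHn ltac:(lia))), Rmax_l. Qed.

Lemma pointwise m n gamma delta x t :
  (1<=m)%nat -> 0<gamma -> 0<delta -> linf n x <= delta ->
  l2sq n x >= linf n x^2 + gamma^2 ->
  0 < t <= PI*INR m/delta ->
  prodR n (fun i => Dk m (x i * t / (2*PI*INR m))) <= 2*PI^2/(gamma^2*t^2).
Proof.
  intros Hm Hg Hd HM HW Ht. destruct Ht as [Ht0 Ht1].
  assert (HmR : 1 <= INR m) by (apply (le_INR 1); auto).
  pose proof PI_RGT_0 as Hpi.
  set (N := 2*INR m+1).
  set (M := linf n x) in *. set (W := l2sq n x) in *.
  assert (HM0 : 0 <= M) by apply linf_nonneg.
  set (k := N^2 * t^2/(4*PI^2*INR m^2)).
  set (y := fun i => x i * t / (2*PI*INR m)).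
  assert (Hy : forall i, (i<n)%nat -> Rabs (y i) <= 1/2).
  { intros i hi. unfold y. assert (hx := linf_ge n x i hi). fold M in hx.
    unfold Rdiv. rewrite !Rabs_mult, Rabs_inv, (Rabs_pos_eq t), (Rabs_pos_eq (2*PI*INR m)) by nra.
    assert (t * delta <= PI * INR m).
    { assert (Ht := Ht1). apply (Rmult_le_compat_r delta) in Ht; [|lra].
      replace (PI * INR m / delta * delta) with (PI * INR m) in Ht by (field; lra). lra. }
    assert (Rabs (x i) * t <= delta * t) by (apply Rmult_le_compat_r; lra).
    assert (Rabs (x i) * t <= PI * INR m) by lra.
    apply (Rmult_le_reg_r (2*PI*INR m)). nra.
    rewrite Rmult_assoc, (Rmult_assoc (Rabs (x i))), Rinv_l by nra. lra. }
  set (a := fun i => N^2 * y i ^2).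
  assert (ha : forall i, a i = k * x i ^ 2).
  { intros i. unfold a, y, k. field. nra. }
  assert (hb : forall i, (i<n)%nat -> 0 <= a i /\ 0 <= Dk m (y i) ^2 /\ Dk m (y i) ^2 * (1 + a i) <= 1).
  { intros i hi. split; [unfold a; nra|]. split; [nra|]. apply Dk_bound; auto. }
  assert (hP := prod_mul_le1 n a (fun i => Dk m (y i) ^ 2) hb).
  rewrite <- prodR_sq in hP.
  assert (hge := prod_ge n a ltac:(intros; apply hb; auto)).
  set (P := prodR n (fun i => 1 + a i)) in *.
  assert (hS : sumR n a = k * W).
  { unfold W, l2sq. rewrite <- sumR_scal. apply sumR_ext. intros; apply ha. }
  assert (hk0 : 0 <= k) by (unfold k; apply Rmult_le_pos; [nra| apply Rlt_le, Rinv_0_lt_compat; nra]).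
  assert (hQ : sumR n (fun i => a i ^ 2) <= k^2 * (M^2 * W)).
  { unfold W, l2sq. rewrite <- sumR_scal. rewrite <- sumR_scal. apply sumR_le. intros i hi.
    rewrite ha. assert (hx := linf_ge n x i hi). fold M in hx.
    assert (x i ^2 <= M^2) by (rewrite <- pow2_abs; pose proof (Rabs_pos (x i)); nra).
    assert (0 <= x i ^2) by nra. assert (0 <= k^2) by nra.
    replace ((k * x i ^ 2) ^ 2) with (k^2 * (x i ^2 * x i ^ 2)) by ring.
    apply Rmult_le_compat_l; auto. nra. }
  assert (hW : gamma^2 <= W - M^2) by lra.
  assert (hW2 : gamma^2 <= W) by nra.
  assert (hk : t^2/PI^2 <= k).
  { unfold k. assert (4 * INR m^2 <= N^2) by (unfold N; nra).
    replace (t^2/PI^2) with (4*INR m^2 * t^2 / (4*PI^2*INR m^2)) by (field; nra).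
    unfold Rdiv. apply Rmult_le_compat_r. apply Rlt_le, Rinv_0_lt_compat; nra.
    apply Rmult_le_compat_r; nra. }
  assert (hPlow : k^2 * gamma^4 / 2 <= P).
  { rewrite hS in hge. assert (0 <= k*W) by nra.
    assert (k^2 * gamma^4 <= k^2 * (W * (W - M^2))).
    { apply Rmult_le_compat_l. nra. replace (gamma^4) with (gamma^2*gamma^2) by ring.
      apply Rmult_le_compat; nra. }
    nra. }
  assert (hk2 : t^4/PI^4 <= k^2).
  { replace (t^4/PI^4) with ((t^2/PI^2)^2) by (field; lra).
    assert (0 <= t^2/PI^2) by (apply Rmult_le_pos; [nra| apply Rlt_le, Rinv_0_lt_compat; nra]). nra. }
  set (g := prodR n (fun i => Dk m (y i))) in *.
  assert (hg0 : 0 <= g).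
  { apply prodR_nonneg. intros; unfold Dk. apply Rmult_le_pos; [apply Rabs_pos| apply Rlt_le, Rinv_0_lt_compat; lra]. }
  set (B := 2*PI^2/(gamma^2*t^2)).
  assert (hB : B^2 * (t^4/PI^4 * gamma^4/2) = 2) by (unfold B; field; split; lra).
  assert (0 < t^4/PI^4) by (apply Rmult_lt_0_compat; [apply pow_lt; lra| apply Rinv_0_lt_compat, pow_lt; lra]).
  assert (hP2 : t^4/PI^4 * gamma^4/2 <= P).
  { apply (Rle_trans _ (k^2 * gamma^4 / 2)); auto.
    assert (0 < gamma^4) by (apply pow_lt; lra). nra. }
  assert (hB0 : 0 < B) by (unfold B; apply Rmult_lt_0_compat; [apply Rmult_lt_0_compat; [lra| apply pow_lt; lra]| apply Rinv_0_lt_compat, Rmult_lt_0_compat; apply pow_lt; lra]).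
  assert (0 < gamma^4) by (apply pow_lt; lra).
  assert (g^2 * (t^4/PI^4 * gamma^4/2) <= 1).
  { apply (Rle_trans _ (g^2 * P)); auto. apply Rmult_le_compat_l; auto. apply pow2_ge_0. }
  change (g <= B).
  destruct (Rle_or_lt g B) as [h|h]; auto. exfalso.
  assert (B^2 < g^2) by nra.
  assert (0 < t^4/PI^4 * gamma^4/2) by (apply Rmult_lt_0_compat; [apply Rmult_lt_0_compat; lra|lra]).
  assert (B^2 * (t^4/PI^4 * gamma^4/2) < g^2 * (t^4/PI^4 * gamma^4/2)) by (apply Rmult_lt_compat_r; auto).
  lra.
Qed.

Lemma cont_sum m (f : nat -> R -> R) : (forall k, continuity (f k)) ->
  continuity (fun y => sumR m (fun k => f k y)).
Proof. intros H. induction m; cbn [sumR].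
  - apply continuity_const. intros u v; auto.
  - apply (continuity_plus (fun y => sumR m (fun k => f k y)) (f m)); auto.
Qed.

Lemma cont_prod m (f : nat -> R -> R) : (forall k, (k < m)%nat -> continuity (f k)) ->
  continuity (fun y => prodR m (fun k => f k y)).
Proof. intros H. induction m; cbn [prodR].
  - apply continuity_const. intros u v; auto.
  - apply (continuity_mult (fun y => prodR m (fun k => f k y)) (f m)); auto.
Qed.

Lemma cont_lin c : continuity (fun y => c * y).
Proof. apply (continuity_scal id c). apply derivable_continuous, derivable_id. Qed.

Lemma cont_Dk m : continuity (Dk m).
Proof.
  unfold Dk, Dsum.
  assert (h1 : continuity (fun y => sumR m (fun k => cos (2 * INR (S k) * (PI * y))))).
  { apply cont_sum. intros k.
    change (continuity (comp cos (fun y => (2 * INR (S k) * PI) * y))) ||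
    (assert (e : (fun y => cos (2 * INR (S k) * (PI * y))) = comp cos (fun y => (2 * INR (S k) * PI) * y))
      by (apply functional_extensionality; intro y; unfold comp; f_equal; ring); rewrite e).
    apply continuity_comp; [apply cont_lin| apply continuity_cos]. }
  assert (h2 : continuity (fun y => 1 + 2 * sumR m (fun k => cos (2 * INR (S k) * (PI * y))))).
  { apply (continuity_plus (fun _ => 1) (fun y => 2 * sumR m (fun k => cos (2 * INR (S k) * (PI * y))))).
    apply continuity_const; intros u v; auto.
    apply (continuity_scal (fun y => sumR m (fun k => cos (2 * INR (S k) * (PI * y)))) 2); auto. }
  assert (h3 : continuity (fun y => Rabs (1 + 2 * sumR m (fun k => cos (2 * INR (S k) * (PI * y)))))).
  { apply (continuity_comp _ Rabs h2 Rcontinuity_abs). }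
  intro y. unfold Rdiv.
  apply (continuity_pt_mult (fun y => Rabs (1 + 2 * sumR m (fun k => cos (2 * INR (S k) * (PI * y))))) (fun _ => / (2 * INR m + 1))).
  apply h3. apply continuity_pt_const. intros u v; auto.
Qed.

Lemma Dk_le1 m y : (1 <= m)%nat -> Rabs y <= 1/2 -> 0 <= Dk m y <= 1.
Proof.
  intros Hm Hy. assert (HmR : 1 <= INR m) by (apply (le_INR 1); auto).
  assert (h := Dk_bound m y Hm Hy).
  assert (h0 : 0 <= Dk m y) by (unfold Dk; apply Rmult_le_pos; [apply Rabs_pos| apply Rlt_le, Rinv_0_lt_compat; lra]).
  assert (0 <= (2*INR m+1)^2 * y^2) by (apply Rmult_le_pos; apply pow2_ge_0).
  split; auto. nra.
Qed.

Lemma y_bound m n delta x t i : (1<=m)%nat -> 0 < delta -> linf n x <= delta ->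
  0 <= t <= PI*INR m/delta -> (i < n)%nat -> Rabs (x i * t / (2*PI*INR m)) <= 1/2.
Proof.
  intros Hm Hd HM [Ht0 Ht1] hi.
  assert (HmR : 1 <= INR m) by (apply (le_INR 1); auto).
  pose proof PI_RGT_0 as Hpi.
  assert (hx := linf_ge n x i hi).
  unfold Rdiv. rewrite !Rabs_mult, Rabs_inv, (Rabs_pos_eq t), (Rabs_pos_eq (2*PI*INR m)) by nra.
  assert (t * delta <= PI * INR m).
  { assert (Ht := Ht1). apply (Rmult_le_compat_r delta) in Ht; [|lra].
    replace (PI * INR m / delta * delta) with (PI * INR m) in Ht by (field; lra). lra. }
  assert (Rabs (x i) * t <= delta * t) by (apply Rmult_le_compat_r; lra).
  assert (Rabs (x i) * t <= PI * INR m) by lra.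
  apply (Rmult_le_reg_r (2*PI*INR m)). nra.
  rewrite Rmult_assoc, (Rmult_assoc (Rabs (x i))), Rinv_l by nra. lra.
Qed.

Theorem lemma5p8 :
  exists c : R, 0 < c /\
  forall (m n : nat) (gamma delta : R) (x : nat -> R),
    (1 <= m)%nat -> (1 <= n)%nat -> 0 < gamma -> 0 < delta ->
    linf n x <= delta ->
    l2sq n x >= linf n x ^ 2 + gamma ^ 2 ->
    RInt (fun t => prodR n (fun i => Fker m (x i * t / (2 * PI * INR m))))
         0 (PI * INR m / delta)
    <= c / gamma.
Proof.
  pose proof PI_RGT_0 as Hpi.
  exists (3*PI). split; [lra|].
  intros m n gamma delta x Hm Hn Hg Hd HM HW.
  assert (HmR : 1 <= INR m) by (apply (le_INR 1); auto).
  assert (eF : Fker m = Dk m) by (apply functional_extensionality; apply Fker_Dk).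
  rewrite eF.
  set (G := fun t => prodR n (fun i => Dk m (x i * t / (2 * PI * INR m)))).
  assert (hcont : continuity G).
  { apply cont_prod. intros k _.
    assert (e : (fun t => Dk m (x k * t / (2 * PI * INR m))) = comp (Dk m) (fun t => (x k / (2 * PI * INR m)) * t))
      by (apply functional_extensionality; intro t; unfold comp; f_equal; field; nra).
    rewrite e. apply continuity_comp; [apply cont_lin| apply cont_Dk]. }
  assert (hex : forall a b, ex_RInt G a b).
  { intros a b. apply (@ex_RInt_continuous R_CompleteNormedModule). intros z _. apply continuity_pt_filterlim. apply hcont. }
  set (T := PI * INR m / delta).
  assert (HT : 0 < T) by (unfold T; apply Rmult_lt_0_compat; [nra| apply Rinv_0_lt_compat; lra]).
  assert (hG1 : forall t, 0 <= t <= T -> G t <= 1).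
  { intros t ht. unfold G. apply prodR_le1. intros i hi. apply Dk_le1; auto.
    apply (y_bound m n delta); auto. }
  set (a := 2*PI/gamma).
  assert (Ha : 0 < a) by (unfold a; apply Rmult_lt_0_compat; [lra| apply Rinv_0_lt_compat; lra]).
  assert (hconst : forall b, 0 <= b <= T -> RInt G 0 b <= b).
  { intros b hb. apply (Rle_trans _ (RInt (fun _ => 1) 0 b)).
    - apply RInt_le; auto; [lra| apply ex_RInt_const|]. intros t ht. apply hG1. lra.
    - rewrite RInt_const. right. unfold scal; simpl; unfold mult; simpl. ring. }
  assert (e3 : 3 * PI / gamma = a + PI / gamma) by (unfold a; field; lra).
  rewrite e3.
  assert (0 < PI/gamma) by (apply Rmult_lt_0_compat; [lra| apply Rinv_0_lt_compat; lra]).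
  destruct (Rle_or_lt T a) as [hTa|hTa].
  - assert (h := hconst T ltac:(lra)). lra.
  - rewrite <- (RInt_Chasles G 0 a T) by auto.
    assert (h1 := hconst a ltac:(lra)).
    set (A := 2*PI^2/gamma^2).
    set (f := fun t => A / t^2).
    set (F := fun t => - A / t).
    assert (hisR : is_RInt f a T (minus (F T) (F a))).
    { apply (@is_RInt_derive R_CompleteNormedModule).
      - intros t ht. rewrite Rmin_left in ht by lra. rewrite Rmax_right in ht by lra.
        unfold F, f. auto_derive. lra. field. lra.
      - intros t ht. rewrite Rmin_left in ht by lra. rewrite Rmax_right in ht by lra.
        apply (@ex_derive_continuous R_AbsRing R_NormedModule). unfold f. auto_derive. apply Rgt_not_eq; nra. }
    assert (h2 : RInt G a T <= RInt f a T).
    { apply RInt_le; auto; [lra| exists (minus (F T) (F a)); auto|].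
      intros t ht. unfold G, f, A.
      replace (2 * PI ^ 2 / gamma ^ 2 / t ^ 2) with (2*PI^2/(gamma^2*t^2)) by (field; lra).
      apply (pointwise m n gamma delta x t); auto. fold T. lra. }
    rewrite (is_RInt_unique _ _ _ _ hisR) in h2.
    assert (e : minus (F T) (F a) = A / a - A / T) by (unfold minus, plus, opp, F; simpl; field; lra).
    rewrite e in h2.
    assert (eA : A / a = PI / gamma) by (unfold A, a; field; lra).
    assert (0 < A / T) by (unfold A; apply Rmult_lt_0_compat; [apply Rmult_lt_0_compat; [nra| apply Rinv_0_lt_compat; nra]| apply Rinv_0_lt_compat; lra]).
    unfold plus; simpl. lra.
Qed.
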